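(* Let $A$ be a group and $A_1=A\setminus\{1\}$. Let $X=\{x_i\mid i\in I\}$ with $I$ totally ordered. Let $$B=\mathrm{sgp}\langle X\cup X^{-1}\mid R\rangle,\qquad R=\{x_p^{\varepsilon}x_q^{\delta}=x_q^{\delta}x_p^{\varepsilon},\ x_q^{\varepsilon}x_q^{-\varepsilon}=1\mid \varepsilon,\delta=\pm1,\ p>q,\ p,q\in I\},$$ which is the free abelian group on $X$. A group $G$ is a Schreier extension of $A$ by $B$ if and only if the following data exist: - a factor set $\{(x_p^{\varepsilon},x_q^{\delta})\mid \varepsilon,\delta=\pm1,\ p>q\}\subseteq A$; - automorphisms $\psi_x$ of $A$ for $x\in X\cup X^{-1}$, written $a^x=\psi_x(a)$ with $a^{xy}=\psi_y(\psi_x(a))$; such that the following equations hold in $A$: 1. $(x_p^{\varepsilon},x_q^{\delta})\,(x_p^{\varepsilon},x_r^{\gamma})^{x_q^{\delta}}\,(x_q^{\delta},x_r^{\gamma})=(x_q^{\delta},x_r^{\gamma})^{x_p^{\varepsilon}}\,(x_p^{\varepsilon},x_r^{\gamma})\,(x_p^{\varepsilon},x_q^{\delta})^{x_r^{\gamma}}$, for all $p>q>r$ and $\varepsilon,\delta,\gamma=\pm1$; 2. $(x_p^{\varepsilon},x_q^{-\delta})\,(x_p^{\varepsilon},x_q^{\delta})^{x_q^{-\delta}}=1$, for all $p>q$ and $\varepsilon,\delta=\pm1$; 3. $(x_p^{\varepsilon},x_q^{\delta})^{x_p^{-\varepsilon}}\,(x_p^{-\varepsilon},x_q^{\delta})=1$,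 for all $p>q$ and $\varepsilon,\delta=\pm1$; 4. $a^{x_q^{\delta}x_p^{\varepsilon}}\,(x_p^{\varepsilon},x_q^{\delta})=(x_p^{\varepsilon},x_q^{\delta})\,a^{x_p^{\varepsilon}x_q^{\delta}}$, for all $p>q$, $\varepsilon,\delta=\pm1$ and $a\in A$; 5. $a^{x_r^{\varepsilon}x_r^{-\varepsilon}}=a$, for all $r\in I$, $\varepsilon=\pm1$ and $a\in A$; and moreover $$G\cong\mathrm{sgp}\langle A_1\cup X\cup X^{-1}\mid S\rangle,$$ where $$S=\{aa'=[aa'],\ ax^{\varepsilon}=x^{\varepsilon}a^{x^{\varepsilon}},\ x_p^{\varepsilon}x_q^{\delta}=x_q^{\delta}x_p^{\varepsilon}(x_p^{\varepsilon},x_q^{\delta}),\ x_q^{\varepsilon}x_q^{-\varepsilon}=1\mid a,a'\in A_1,\ x\in X,\ \varepsilon,\delta=\pm1,\ p>q\}.$$ Here $[aa']$ is the product in $A$, and elements equal to $1$ are read as the empty word.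
   Context: Basic definitions: - A Schreier extension of $A$ by $B$ is a group containing (a copy of) $A$ as a normal subgroup with quotient isomorphic to $B$. - $\mathrm{sgp}\langle X\mid S\rangle$ denotes the monoid presented by generators $X$ and relations $S$. - $X^{-1}=\{x_i^{-1}\mid i\in I\}$ is a set of new letters. *)

(* Defs.v *)
From Stdlib Require Import List Classical ClassicalEpsilon.
Import ListNotations.


Record Group := {
  carrier :> Type;
  gmul : carrier -> carrier -> carrier;
  gone : carrier;
  ginv : carrier -> carrier;
  gmulA : forall x y z, gmul x (gmul y z) = gmul (gmul x y) z;
  gmul1l : forall x, gmul gone x = x;
  gmul1r : forall x, gmul x gone = x;
  gmulVl : forall x, gmul (ginv x) x = gone;
  gmulVr : forall x, gmul x (ginv x) = gone }.

Arguments gmul {g}. Arguments gone {g}. Arguments ginv {g}.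

Definition is_hom (G H : Group) (f : G -> H) : Prop :=
  forall x y, f (gmul x y) = gmul (f x) (f y).

Definition is_aut (A : Group) (f : A -> A) : Prop :=
  is_hom A A f /\ (forall x y, f x = f y -> x = y) /\ (forall y, exists x, f x = y).

Inductive cong (Gen : Type) (rel : list Gen -> list Gen -> Prop)
  : list Gen -> list Gen -> Prop :=
| cong_base : forall u l r v, rel l r -> cong Gen rel (u ++ l ++ v) (u ++ r ++ v)
| cong_refl : forall w, cong Gen rel w w
| cong_sym : forall w1 w2, cong Gen rel w1 w2 -> cong Gen rel w2 w1
| cong_trans : forall w1 w2 w3, cong Gen rel w1 w2 -> cong Gen rel w2 w3 -> cong Gen rel w1 w3.

(** [presents M Gen rel]: the monoid underlying the group M is isomorphic to
    the monoid sgp<Gen | rel> = (words over Gen) / (congruence generated by rel). *)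
Definition presents (M : Group) (Gen : Type) (rel : list Gen -> list Gen -> Prop)
  : Prop :=
  exists phi : list Gen -> M,
    phi [] = gone /\
    (forall u v, phi (u ++ v) = gmul (phi u) (phi v)) /\
    (forall m, exists w, phi w = m) /\
    (forall u v, phi u = phi v <-> cong Gen rel u v).

(** Letters of X ∪ X^{-1}: (i, true) is x_i, (i, false) is x_i^{-1}. *)
Definition letter (I : Type) := (I * bool)%type.

Definition relB (I : Type) (lt : I -> I -> Prop)
  (u v : list (letter I)) : Prop :=
  (exists p q e d, lt q p /\ u = [(p, e); (q, d)] /\ v = [(q, d); (p, e)])
  \/ (exists q e, u = [(q, e); (q, negb e)] /\ v = []).

Definition schreier_ext (A G : Group) (I : Type) (lt : I -> I -> Prop) : Prop :=
  exists (H : Group) (iota : A -> G) (pi : G -> H),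
    is_hom A G iota /\ (forall a b, iota a = iota b -> a = b) /\
    is_hom G H pi /\ (forall h, exists g, pi g = h) /\
    (forall g, pi g = gone <-> exists a, g = iota a) /\
    presents H (letter I) (relB I lt).

Definition genS (A : Group) (I : Type) : Type :=
  ({ a : A | a <> gone } + letter I)%type.

Definition wordA (A : Group) (I : Type) (a : A) : list (genS A I) :=
  match excluded_middle_informative (a = gone) with
  | left _ => []
  | right h => [inl (exist _ a h)]
  end.

(** Relations S. [fs p e q d] is the factor-set element (x_p^e, x_q^d);
    [psi i e] is the automorphism a |-> a^{x_i^e}. *)
Definition relS (A : Group) (I : Type) (lt : I -> I -> Prop)
  (fs : I -> bool -> I -> bool -> A) (psi : I -> bool -> A -> A)
  (u v : list (genS A I)) : Prop :=
  (exists (a a' : {a : A | a <> gone}),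
      u = [inl a; inl a'] /\ v = wordA A I (gmul (proj1_sig a) (proj1_sig a')))
  \/ (exists (a : {a : A | a <> gone}) i e,
      u = [inl a; inr (i, e)] /\ v = inr (i, e) :: wordA A I (psi i e (proj1_sig a)))
  \/ (exists p q e d, lt q p /\
      u = [inr (p, e); inr (q, d)] /\
      v = [inr (q, d); inr (p, e)] ++ wordA A I (fs p e q d))
  \/ (exists q e, u = [inr (q, e); inr (q, negb e)] /\ v = []).

(* Main.v *)
Require Import Defs.
From Stdlib Require Import List Classical ClassicalEpsilon ProofIrrelevance FunctionalExtensionality PropExtensionality Bool.
Import ListNotations.


Section GroupLemmas.
Variable G : Group.
Implicit Types x y z : G.

Lemma gA' x y z : gmul (gmul x y) z = gmul x (gmul y z).
Proof. now rewrite gmulA. Qed.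
Lemma gcan1 x y : gmul (ginv x) (gmul x y) = y.
Proof. now rewrite gmulA, gmulVl, gmul1l. Qed.
Lemma gcan2 x y : gmul x (gmul (ginv x) y) = y.
Proof. now rewrite gmulA, gmulVr, gmul1l. Qed.
Lemma gmul_cancel_l x y z : gmul x y = gmul x z -> y = z.
Proof. intro H. rewrite <- (gcan1 x y), <- (gcan1 x z). now rewrite H. Qed.
Lemma gmul_cancel_r x y z : gmul y x = gmul z x -> y = z.
Proof. intro H. rewrite <- (gmul1r _ y), <- (gmul1r _ z), <- (gmulVr _ x), !gmulA, H. reflexivity. Qed.
Lemma ginv_unique x y : gmul x y = gone -> y = ginv x.
Proof. intro H. apply (gmul_cancel_l x). now rewrite H, gmulVr. Qed.
Lemma ginv_inv x : ginv (ginv x) = x.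
Proof. symmetry. apply ginv_unique. apply gmulVl. Qed.
Lemma ginv_one : ginv (@gone G) = gone.
Proof. symmetry. apply ginv_unique. apply gmul1l. Qed.
Lemma ginv_mul x y : ginv (gmul x y) = gmul (ginv y) (ginv x).
Proof. symmetry. apply ginv_unique. rewrite gA', gcan2. apply gmulVr. Qed.
Lemma idem_one x : gmul x x = x -> x = gone.
Proof. intro H. apply (gmul_cancel_l x). now rewrite H, gmul1r. Qed.
End GroupLemmas.

Hint Rewrite gmul1l gmul1r gmulVl gmulVr gA' gcan1 gcan2 ginv_inv ginv_one ginv_mul : grp.

Lemma test (G : Group) (a b c : G) : gmul (ginv (gmul a b)) (gmul a (gmul b c)) = c.
Proof. autorewrite with grp. reflexivity. Qed.


Section Cong.
Variable Gen : Type.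
Variable rel : list Gen -> list Gen -> Prop.
Notation cg := (cong Gen rel).

Lemma cong_app u v s t : cg u v -> cg (s ++ u ++ t) (s ++ v ++ t).
Proof.
  induction 1.
  - replace (s ++ (u ++ l ++ v) ++ t) with ((s ++ u) ++ l ++ (v ++ t)) by (rewrite !app_assoc; reflexivity).
    replace (s ++ (u ++ r ++ v) ++ t) with ((s ++ u) ++ r ++ (v ++ t)) by (rewrite !app_assoc; reflexivity).
    apply cong_base; assumption.
  - apply cong_refl.
  - apply cong_sym; assumption.
  - eapply cong_trans; eassumption.
Qed.
Lemma cong_appl u v t : cg u v -> cg (u ++ t) (v ++ t).
Proof. intro H. apply (cong_app u v [] t) in H. exact H. Qed.
Lemma cong_appr u v s : cg u v -> cg (s ++ u) (s ++ v).
Proof. intro H. apply (cong_app u v s []) in H. now rewrite !app_nil_r in H. Qed.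
Lemma cong_app2 u v u' v' : cg u v -> cg u' v' -> cg (u ++ u') (v ++ v').
Proof. intros. eapply cong_trans. apply cong_appl; eassumption. apply cong_appr; assumption. Qed.
Lemma cong_rel l r : rel l r -> cg l r.
Proof. intro H. pose proof (cong_base Gen rel [] l r [] H). now rewrite !app_nil_r in H0. Qed.

Variable inv : Gen -> Gen.
Hypothesis rel_inv : forall g, cg [g; inv g] [].
Hypothesis inv_inv : forall g, inv (inv g) = g.

Definition winv (w : list Gen) := rev (map inv w).
Lemma winv_winv w : winv (winv w) = w.
Proof. unfold winv. rewrite map_rev, rev_involutive, map_map.
  induction w; simpl; [reflexivity| now rewrite inv_inv, IHw]. Qed.
Lemma w_winv w : cg (w ++ winv w) [].
Proof. induction w as [|g w IH]; simpl. apply cong_refl.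
  unfold winv in *. simpl. rewrite app_assoc.
  eapply cong_trans. apply (cong_app (w ++ rev (map inv w)) [] [g] [inv g]). exact IH.
  simpl. apply rel_inv. Qed.
Lemma winv_w w : cg (winv w ++ w) [].
Proof. rewrite <- (winv_winv w) at 2. apply w_winv. Qed.

Definition cls (w : list Gen) : list Gen -> Prop := cg w.
Definition Q := { P : list Gen -> Prop | exists w, P = cls w }.
Definition mk (w : list Gen) : Q := exist _ (cls w) (ex_intro _ w eq_refl).
Definition rep (q : Q) : list Gen := proj1_sig (constructive_indefinite_description _ (proj2_sig q)).
Lemma rep_spec q : proj1_sig q = cls (rep q).
Proof. unfold rep. destruct (constructive_indefinite_description _ _). exact e. Qed.
Lemma mk_rep q : mk (rep q) = q.
Proof. destruct q as [P HP]. pose proof (rep_spec (exist _ P HP)) as E. simpl in E.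
  remember (rep (exist _ P HP)) as w eqn:Ew. clear Ew. subst P.
  unfold mk. f_equal. apply proof_irrelevance. Qed.
Lemma mk_eq u v : mk u = mk v <-> cg u v.
Proof. split.
  - intro H. apply (f_equal (@proj1_sig _ _)) in H. simpl in H.
    assert (cls v v) by apply cong_refl. rewrite <- H in H0. exact H0.
  - intro H. unfold mk. assert (E : cls u = cls v).
    { apply functional_extensionality; intro w. apply propositional_extensionality. unfold cls. split; intro.
      eapply cong_trans. apply cong_sym. eassumption. assumption. eapply cong_trans; eassumption. }
    generalize (ex_intro (fun w0 => cls u = cls w0) u eq_refl) as pf1.
    generalize (ex_intro (fun w0 => cls v = cls w0) v eq_refl) as pf2.
    rewrite E. intros. f_equal. apply proof_irrelevance.
Qed.
Lemma rep_mk w : cg (rep (mk w)) w.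
Proof. apply mk_eq. apply mk_rep. Qed.

Definition qmul (a b : Q) := mk (rep a ++ rep b).
Definition qinv (a : Q) := mk (winv (rep a)).
Definition qone := mk [].
Lemma qmul_mk u v : qmul (mk u) (mk v) = mk (u ++ v).
Proof. unfold qmul. apply mk_eq. apply cong_app2; apply rep_mk. Qed.
Lemma mk_repl u w : mk (rep (mk u) ++ w) = mk (u ++ w).
Proof. apply mk_eq. apply cong_appl. apply rep_mk. Qed.
Lemma mk_repr u w : mk (w ++ rep (mk u)) = mk (w ++ u).
Proof. apply mk_eq. apply cong_appr. apply rep_mk. Qed.

Lemma qassoc x y z : qmul x (qmul y z) = qmul (qmul x y) z.
Proof. unfold qmul. rewrite mk_repr, mk_repl. now rewrite app_assoc. Qed.
Lemma q1l x : qmul qone x = x.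
Proof. unfold qmul, qone. rewrite mk_repl. apply mk_rep. Qed.
Lemma q1r x : qmul x qone = x.
Proof. unfold qmul, qone. rewrite mk_repr, app_nil_r. apply mk_rep. Qed.
Lemma qVl x : qmul (qinv x) x = qone.
Proof. unfold qmul, qinv, qone. rewrite mk_repl. apply mk_eq. apply winv_w. Qed.
Lemma qVr x : qmul x (qinv x) = qone.
Proof. unfold qmul, qinv, qone. rewrite mk_repr. apply mk_eq. apply w_winv. Qed.

Definition QG : Group := {| carrier := Q; gmul := qmul; gone := qone; ginv := qinv;
  gmulA := qassoc; gmul1l := q1l; gmul1r := q1r; gmulVl := qVl; gmulVr := qVr |}.

Lemma QG_presents : presents QG Gen rel.
Proof.
  exists mk. split; [reflexivity|]. split; [|split].
  - intros u v. simpl. unfold qmul. rewrite mk_repl, mk_repr. reflexivity.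
  - intro m. exists (rep m). apply mk_rep.
  - intros u v. apply mk_eq.
Qed.
End Cong.


Section Act.
Variable A : Group.
Variable I : Type.
Variable lt : I -> I -> Prop.
Hypothesis lt_irrefl : forall i, ~ lt i i.
Hypothesis lt_trans : forall i j k, lt i j -> lt j k -> lt i k.
Hypothesis lt_total : forall i j, lt i j \/ i = j \/ lt j i.
Variable fs : I -> bool -> I -> bool -> A.
Variable psi : I -> bool -> A -> A.

Notation L := (letter I).
Definition linv (x : L) : L := (fst x, negb (snd x)).
Definition fsl (y x : L) := fs (fst y) (snd y) (fst x) (snd x).
Definition psil (x : L) := psi (fst x) (snd x).

Fixpoint M (r : list L) (x : L) : list L * A :=
  match r with
  | [] => ([x], gone)
  | y :: r' =>
    if excluded_middle_informative (lt (fst x) (fst y)) then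
      (y :: fst (M r' x), gmul (psil y (snd (M r' x))) (fsl y x))
    else if excluded_middle_informative (y = linv x) then (r', gone)
    else (x :: r, gone)
  end.

Definition R (y z : L) := lt (fst z) (fst y) \/ z = y.
Definition hd_ok (y : L) (r : list L) := match r with [] => True | z :: _ => R y z end.
Fixpoint srt (r : list L) : Prop := match r with [] => True | y :: r' => hd_ok y r' /\ srt r' end.

Lemma R_trans (x y z : L) : R x y -> R y z -> R x z.
Proof. unfold R. intros [h|h] [h'|h']; subst; eauto. Qed.

Lemma lt_asym i j : lt i j -> ~ lt j i.
Proof. intros h h'. apply (lt_irrefl i). eauto. Qed.

Lemma linv_neq (x : L) : linv x <> x.
Proof. destruct x as [i b]; destruct b; unfold linv; simpl; congruence. Qed.
Lemma linv_linv (x : L) : linv (linv x) = x.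
Proof. destruct x as [i b]; unfold linv; simpl. now rewrite negb_involutive. Qed.

Lemma M_gt (y : L) (r : list L) (x : L) : lt (fst x) (fst y) ->
  M (y :: r) x = (y :: fst (M r x), gmul (psil y (snd (M r x))) (fsl y x)).
Proof. intro h. simpl. destruct (excluded_middle_informative _); [reflexivity| contradiction]. Qed.
Lemma M_cancel (r : list L) (x : L) : M (linv x :: r) x = (r, gone).
Proof. simpl. destruct (excluded_middle_informative _) as [h|_]. exfalso; eapply lt_irrefl; exact h.
  destruct (excluded_middle_informative _); [reflexivity| congruence]. Qed.
Lemma M_cancel' (r : list L) (x : L) : M (x :: r) (linv x) = (r, gone).
Proof. pose proof (M_cancel r (linv x)) as C. rewrite linv_linv in C. exact C. Qed.
Lemma M_push (y : L) (r : list L) (x : L) : ~ lt (fst x) (fst y) -> y <> linv x -> M (y::r) x = (x :: y :: r, gone).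
Proof. intros h h'. simpl. destruct (excluded_middle_informative _); [contradiction|].
  destruct (excluded_middle_informative _); [contradiction|reflexivity]. Qed.
Lemma M_push' (r : list L) (x : L) : hd_ok x r -> M r x = (x :: r, gone).
Proof. destruct r as [|y r]; simpl. reflexivity. intro h. apply M_push.
  - destruct h as [h|h]. now apply lt_asym. subst. apply lt_irrefl.
  - intro e. subst y. destruct h as [h|h]. simpl in h. eapply lt_irrefl; exact h. eapply linv_neq; exact h.
Qed.
Lemma R_of_not (y x : L) : ~ lt (fst x) (fst y) -> y <> linv x -> R x y.
Proof. destruct x as [q d], y as [p e]; simpl; intros h h'. unfold R; simpl.
  destruct (lt_total p q) as [l|[l|l]]; auto. subst. right. destruct e, d; try reflexivity; exfalso; apply h'; reflexivity.
  contradiction. Qed.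
Lemma M_hd (y : L) (r : list L) (x : L) : hd_ok y r -> srt r -> R y x -> hd_ok y (fst (M r x)).
Proof. destruct r as [|z r]; simpl; intros h s hx. exact hx.
  destruct (excluded_middle_informative _). simpl. exact h.
  destruct (excluded_middle_informative _). destruct s as [s1 s2]. destruct r as [|w r]; simpl; auto. apply (R_trans y z w); auto.
  simpl. exact hx. Qed.
Lemma M_srt (r : list L) (x : L) : srt r -> srt (fst (M r x)).
Proof. induction r as [|y r IH]; simpl; intro s. auto.
  destruct s as [s1 s2].
  destruct (excluded_middle_informative _) as [h|h]. simpl. split; auto. apply M_hd; auto. left; exact h.
  destruct (excluded_middle_informative _) as [h'|h']. exact s2.
  simpl. split; auto. apply R_of_not; auto. Qed.

Definition actL (w : list L) (r : list L) := fold_left (fun r x => fst (M r x)) w r.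

Lemma actL_rev (r : list L) : srt r -> actL (rev r) [] = r.
Proof. induction r as [|y r IH]; simpl; intros. reflexivity. destruct H.
  unfold actL. rewrite fold_left_app. fold (actL (rev r) []). rewrite IH by auto. simpl.
  rewrite M_push' by auto. reflexivity. Qed.

Hypothesis psi_hom : forall i e a b, psi i e (gmul a b) = gmul (psi i e a) (psi i e b).
Hypothesis cond1 : forall p q r e d g, lt q p -> lt r q ->
       gmul (gmul (fs p e q d) (psi q d (fs p e r g))) (fs q d r g) =
       gmul (gmul (psi p e (fs q d r g)) (fs p e r g)) (psi r g (fs p e q d)).
Hypothesis cond2 : forall p q e d, lt q p ->
       gmul (fs p e q (negb d)) (psi q (negb d) (fs p e q d)) = gone.
Hypothesis cond3 : forall p q e d, lt q p ->
       gmul (psi p (negb e) (fs p e q d)) (fs p (negb e) q d) = gone.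
Hypothesis cond4 : forall p q e d (a : A), lt q p ->
       gmul (psi p e (psi q d a)) (fs p e q d) =
       gmul (fs p e q d) (psi q d (psi p e a)).
Hypothesis cond5 : forall r e (a : A), psi r (negb e) (psi r e a) = a.

Lemma psil_hom x a b : psil x (gmul a b) = gmul (psil x a) (psil x b).
Proof. apply psi_hom. Qed.
Lemma psil_one x : psil x gone = gone.
Proof. apply idem_one. rewrite <- psil_hom. now rewrite gmul1l. Qed.
Lemma c1' x z w : lt (fst z) (fst x) -> lt (fst w) (fst z) ->
  gmul (gmul (fsl x z) (psil z (fsl x w))) (fsl z w) = gmul (gmul (psil x (fsl z w)) (fsl x w)) (psil w (fsl x z)).
Proof. apply cond1. Qed.
Lemma c2' x z : lt (fst z) (fst x) -> gmul (fsl x (linv z)) (psil (linv z) (fsl x z)) = gone.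
Proof. apply cond2. Qed.
Lemma c3' x z : lt (fst z) (fst x) -> gmul (psil (linv x) (fsl x z)) (fsl (linv x) z) = gone.
Proof. apply cond3. Qed.
Lemma c4r (x z : L) a r : lt (fst z) (fst x) ->
  gmul (fsl x z) (gmul (psil z (psil x a)) r) = gmul (psil x (psil z a)) (gmul (fsl x z) r).
Proof. intro h. rewrite !gmulA. f_equal. symmetry. apply cond4. exact h. Qed.
Lemma c5' x a : psil (linv x) (psil x a) = a.
Proof. apply cond5. Qed.

Lemma alg_A (y x z : L) c1 c2 c3 c4 : lt (fst x) (fst y) -> lt (fst z) (fst x) ->
  gmul c2 (psil z c1) = gmul (gmul c4 (psil x c3)) (fsl x z) ->
  gmul (gmul (psil y c2) (fsl y z)) (psil z (gmul (psil y c1) (fsl y x))) =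
  gmul (gmul (gmul (psil y c4) (fsl y x)) (psil x (gmul (psil y c3) (fsl y z)))) (fsl x z).
Proof.
  intros hxy hzx H. assert (hzy : lt (fst z) (fst y)) by eauto.
  rewrite !psil_hom. autorewrite with grp.
  rewrite (c4r y z c1 _ hzy), (c4r y x c3 _ hxy).
  rewrite gmulA, <- psil_hom, H, !psil_hom. autorewrite with grp.
  do 2 f_equal. pose proof (c1' y x z hxy hzx) as C. autorewrite with grp in C. symmetry; exact C.
Qed.

Lemma M_comm (r : list L) : srt r -> forall x z : L, lt (fst z) (fst x) ->
  fst (M (fst (M r x)) z) = fst (M (fst (M r z)) x) /\
  gmul (snd (M (fst (M r x)) z)) (psil z (snd (M r x))) =
  gmul (gmul (snd (M (fst (M r z)) x)) (psil x (snd (M r z)))) (fsl x z).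
Proof.
  induction r as [|y r IH]; intros s x z hzx.
  - change (M [] x) with ([x], @gone A). change (M [] z) with ([z], @gone A). cbn [fst snd].
    rewrite (M_gt x [] z hzx). rewrite (M_push' [z] x) by (left; exact hzx). cbn [fst snd].
    split. reflexivity. rewrite !psil_one. autorewrite with grp. reflexivity.
  - destruct s as [s1 s2].
    destruct (excluded_middle_informative (lt (fst x) (fst y))) as [hxy|hxy].
    + assert (hzy : lt (fst z) (fst y)) by eauto.
      rewrite (M_gt y r x hxy). cbn [fst snd]. rewrite (M_gt y _ z hzy).
      rewrite (M_gt y r z hzy). cbn [fst snd]. rewrite (M_gt y _ x hxy). cbn [fst snd].
      destruct (IH s2 x z hzx) as [IH1 IH2]. split. f_equal; exact IH1.
      apply alg_A; assumption.
    + destruct (excluded_middle_informative (y = linv x)) as [hy|hy].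
      * subst y. rewrite M_cancel. cbn [fst snd].
        assert (hz' : lt (fst z) (fst (linv x))) by exact hzx.
        rewrite (M_gt (linv x) r z hz'). cbn [fst snd]. rewrite M_cancel. cbn [fst snd].
        split. reflexivity.
        rewrite psil_one, gmul1r, gmul1l, psil_hom.
        assert (E : psil x (psil (linv x) (snd (M r z))) = snd (M r z))
          by (pose proof (c5' (linv x) (snd (M r z))) as C; rewrite linv_linv in C; exact C).
        rewrite E.
        rewrite <- gmulA. rewrite <- (gmul1r _ (snd (M r z))) at 1. f_equal.
        symmetry. pose proof (c3' (linv x) z hz') as C. rewrite linv_linv in C. exact C.
      * rewrite (M_push y r x hxy hy). cbn [fst snd]. rewrite (M_gt x _ z hzx). cbn [fst snd].
        rewrite (M_push' (fst (M (y :: r) z)) x).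
        2:{ apply M_hd. apply R_of_not; assumption. simpl; split; assumption. left; exact hzx. }
        cbn [fst snd]. split. reflexivity.
        rewrite psil_one, gmul1r, gmul1l. reflexivity.
Qed.

Lemma M_inv (r : list L) : srt r -> forall x : L,
  fst (M (fst (M r x)) (linv x)) = r /\
  gmul (snd (M (fst (M r x)) (linv x))) (psil (linv x) (snd (M r x))) = gone.
Proof.
  induction r as [|y r IH]; intros s x.
  - change (M [] x) with ([x], @gone A). cbn [fst snd].
    rewrite M_cancel'. cbn [fst snd]. split. reflexivity.
    rewrite psil_one. apply gmul1l.
  - destruct s as [s1 s2].
    destruct (excluded_middle_informative (lt (fst x) (fst y))) as [hxy|hxy].
    + assert (hxy' : lt (fst (linv x)) (fst y)) by exact hxy.
      rewrite (M_gt y r x hxy). cbn [fst snd]. rewrite (M_gt y _ (linv x) hxy'). cbn [fst snd].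
      destruct (IH s2 x) as [IH1 IH2]. split. f_equal; exact IH1.
      rewrite !psil_hom. autorewrite with grp.
      rewrite (c4r y (linv x) (snd (M r x)) _ hxy').
      rewrite gmulA, <- psil_hom, IH2, psil_one, gmul1l.
      pose proof (c2' y x hxy) as C. exact C.
    + destruct (excluded_middle_informative (y = linv x)) as [hy|hy].
      * subst y. rewrite M_cancel. cbn [fst snd]. rewrite (M_push' r (linv x)) by exact s1.
        cbn [fst snd]. split. reflexivity. rewrite psil_one. apply gmul1l.
      * rewrite (M_push y r x hxy hy). cbn [fst snd].
        rewrite M_cancel'. cbn [fst snd]. split. reflexivity.
        rewrite psil_one. apply gmul1l.
Qed.

Notation gS := (genS A I).
Notation cS := (cong gS (relS A I lt fs psi)).
Notation cB := (cong L (relB I lt)).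

Lemma wordA_one : wordA A I gone = [].
Proof. unfold wordA. destruct (excluded_middle_informative _); [reflexivity|congruence]. Qed.
Lemma wordA_ne (a : A) (h : a <> gone) : wordA A I a = [inl (exist _ a h)].
Proof. unfold wordA. destruct (excluded_middle_informative _); [contradiction|].
  do 3 f_equal. apply proof_irrelevance. Qed.
Lemma wordA_sig (a : {a : A | a <> gone}) : wordA A I (proj1_sig a) = [inl a].
Proof. destruct a as [a h]. apply wordA_ne. Qed.

Lemma L5 (a b : A) : cS (wordA A I a ++ wordA A I b) (wordA A I (gmul a b)).
Proof.
  destruct (classic (a = gone)) as [ha|ha]. subst. rewrite wordA_one, gmul1l. apply cong_refl.
  destruct (classic (b = gone)) as [hb|hb]. subst. rewrite wordA_one, gmul1r, app_nil_r. apply cong_refl.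
  rewrite (wordA_ne a ha), (wordA_ne b hb). apply cong_rel. left.
  exists (exist _ a ha), (exist _ b hb). split; reflexivity.
Qed.

Lemma L4 (a : A) (x : L) : cS (wordA A I a ++ [inr x]) ([inr x] ++ wordA A I (psil x a)).
Proof.
  destruct (classic (a = gone)) as [ha|ha]. subst. rewrite psil_one, wordA_one. apply cong_refl.
  rewrite (wordA_ne a ha). apply cong_rel. right; left. exists (exist _ a ha), (fst x), (snd x).
  destruct x; split; reflexivity.
Qed.

Lemma L3 (u : list L) (a : A) : exists a', cS (wordA A I a ++ map inr u) (map inr u ++ wordA A I a').
Proof.
  revert a. induction u as [|x u IH]; intro a. exists a. simpl. rewrite app_nil_r. apply cong_refl.
  destruct (IH (psil x a)) as [a' H]. exists a'. simpl.
  eapply cong_trans. change (wordA A I a ++ inr x :: map inr u) with (wordA A I a ++ [inr x] ++ map inr u).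
  rewrite app_assoc. apply cong_appl. apply L4.
  simpl. change (inr x :: map inr u ++ wordA A I a') with ([inr x] ++ (map inr u ++ wordA A I a')).
  change (inr x :: wordA A I (psil x a) ++ map inr u) with ([inr x] ++ (wordA A I (psil x a) ++ map inr u)).
  apply cong_appr. exact H.
Qed.

Lemma cS_x (x : L) : cS [inr x; inr (linv x)] [].
Proof. apply cong_rel. right; right; right. exists (fst x), (snd x). destruct x; split; reflexivity. Qed.
Lemma cS_x' (x : L) : cS [inr (linv x); inr x] [].
Proof. pose proof (cS_x (linv x)) as C. rewrite linv_linv in C. exact C. Qed.

Lemma app_helper {T : Type} (m : list T) (a b : T) W : m ++ [a; b] ++ W = (m ++ [a]) ++ [b] ++ W.
Proof. rewrite <- app_assoc. reflexivity. Qed.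

Lemma L6 (r : list L) (x : L) :
  cS (map inr (rev r) ++ [inr x]) (map inr (rev (fst (M r x))) ++ wordA A I (snd (M r x))).
Proof.
  induction r as [|y r IH].
  - simpl. rewrite wordA_one. apply cong_refl.
  - destruct (excluded_middle_informative (lt (fst x) (fst y))) as [hxy|hxy].
    + rewrite (M_gt y r x hxy). cbn [fst snd rev]. rewrite !map_app.
      eapply cong_trans.
      { rewrite <- app_assoc. apply cong_appr. simpl. apply cong_rel. right; right; left.
        exists (fst y), (fst x), (snd y), (snd x). split. exact hxy. destruct x, y. split; reflexivity. }
      eapply cong_trans.
      { rewrite app_helper.
        apply cong_appl. exact IH. }
      rewrite <- !app_assoc. apply cong_appr. rewrite app_assoc.
      eapply cong_trans. apply cong_appl. apply L4.
      rewrite <- app_assoc. apply cong_appr. apply L5.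
    + destruct (excluded_middle_informative (y = linv x)) as [hy|hy].
      * subst y. rewrite M_cancel. cbn [fst snd rev]. rewrite wordA_one, app_nil_r, map_app, <- app_assoc.
        rewrite <- (app_nil_r (map inr (rev r))) at 2. apply cong_appr. apply cS_x'.
      * rewrite (M_push y r x hxy hy). cbn [fst snd rev]. rewrite wordA_one, app_nil_r, !map_app. apply cong_refl.
Qed.

Definition actg (g : gS) (n : list L * A) : list L * A :=
  match g with
  | inl a => (fst n, gmul (snd n) (proj1_sig a))
  | inr x => (fst (M (fst n) x), gmul (snd (M (fst n) x)) (psil x (snd n)))
  end.
Definition act (w : list gS) (n : list L * A) := fold_left (fun n g => actg g n) w n.

Lemma act_app u v n : act (u ++ v) n = act v (act u n).
Proof. unfold act. apply fold_left_app. Qed.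
Lemma act_wordA (a : A) n : act (wordA A I a) n = (fst n, gmul (snd n) a).
Proof. destruct (classic (a = gone)) as [ha|ha]. subst. rewrite wordA_one, gmul1r. destruct n; reflexivity.
  rewrite (wordA_ne a ha). reflexivity. Qed.
Lemma act_srt w : forall n, srt (fst n) -> srt (fst (act w n)).
Proof. induction w as [|g w IH]; intros n h. exact h. simpl. apply IH.
  destruct g; simpl. exact h. apply M_srt; assumption. Qed.

Lemma act_rel u v n : relS A I lt fs psi u v -> srt (fst n) -> act u n = act v n.
Proof.
  destruct n as [r b]. intros H hs. simpl in hs.
  destruct H as [H|[H|[H|H]]].
  - destruct H as [a [a' [-> ->]]]. rewrite act_wordA. simpl. now rewrite gmulA.
  - destruct H as [a [i [e [-> ->]]]]. change (inr (i, e) :: wordA A I (psi i e (proj1_sig a))) with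
      ([inr (i,e)] ++ wordA A I (psi i e (proj1_sig a))). rewrite act_app, act_wordA. simpl.
    f_equal. unfold psil; simpl. rewrite psi_hom. now rewrite gmulA.
  - destruct H as [p [q [e [d [hqp [-> ->]]]]]]. rewrite act_app, act_wordA. simpl.
    set (x := (p,e) : L). set (z := (q,d) : L).
    destruct (M_comm r hs x z hqp) as [E1 E2]. f_equal. exact E1.
    rewrite !psil_hom. rewrite gmulA, E2.
    change (fs p e q d) with (fsl x z).
    rewrite !gA'. do 2 f_equal. symmetry. apply (cond4 p q e d b hqp).
  - destruct H as [q [e [-> ->]]]. simpl.
    destruct (M_inv r hs (q,e)) as [E1 E2]. unfold linv in E1, E2. simpl in E1, E2.
    f_equal. exact E1. rewrite psil_hom, gmulA, E2, gmul1l. unfold psil; simpl.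
    apply cond5.
Qed.

Lemma act_cong u v : cS u v -> forall n, srt (fst n) -> act u n = act v n.
Proof.
  induction 1; intros n hn.
  - rewrite !act_app. f_equal. apply act_rel. assumption. apply act_srt. exact hn.
  - reflexivity.
  - symmetry. auto.
  - rewrite IHcong1 by exact hn. auto.
Qed.

Lemma actL_app u v r : actL u (actL v r) = actL (v ++ u) r.
Proof. unfold actL. now rewrite fold_left_app. Qed.
Lemma actL_srt w : forall r, srt r -> srt (actL w r).
Proof. induction w as [|x w IH]; intros r h. exact h. simpl. apply IH. apply M_srt; assumption. Qed.
Lemma actL_cong u v : cB u v -> forall r, srt r -> actL u r = actL v r.
Proof.
  induction 1; intros r0 hr.
  - rewrite <- !actL_app. f_equal. destruct H as [H|H].
    + destruct H as [p [q [e [d [hqp [-> ->]]]]]]. simpl.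
      destruct (M_comm (actL u r0) (actL_srt u r0 hr) (p,e) (q,d) hqp) as [E1 _]. exact E1.
    + destruct H as [q [e [-> ->]]]. simpl.
      destruct (M_inv (actL u r0) (actL_srt u r0 hr) (q,e)) as [E1 _]. exact E1.
  - reflexivity.
  - symmetry. auto.
  - rewrite IHcong1 by exact hr. auto.
Qed.

Lemma NF_lemma u : cS u (map inr (rev (fst (act u ([], gone)))) ++ wordA A I (snd (act u ([], gone)))).
Proof.
  induction u as [|g u IH] using rev_ind.
  - simpl. rewrite wordA_one. apply cong_refl.
  - rewrite act_app. destruct (act u ([], gone)) as [r b]. simpl in IH |- *.
    eapply cong_trans. apply cong_appl. exact IH. rewrite <- app_assoc.
    destruct g as [a|x]; simpl.
    + apply cong_appr. rewrite <- wordA_sig. apply L5.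
    + eapply cong_trans. apply cong_appr. apply L4. rewrite app_assoc.
      eapply cong_trans. apply cong_appl. apply L6. rewrite <- app_assoc. apply cong_appr. apply L5.
Qed.
End Act.


Fixpoint projw {A : Group} {I : Type} (w : list (genS A I)) : list (letter I) :=
  match w with
  | [] => []
  | inl _ :: w => projw w
  | inr x :: w => x :: projw w
  end.

Lemma projw_app {A : Group} {I : Type} (u v : list (genS A I)) : projw (u ++ v) = projw u ++ projw v.
Proof. induction u as [|[a|x] u IH]; simpl; auto. now rewrite IH. Qed.
Lemma projw_wordA (A : Group) (I : Type) (a : A) : projw (wordA A I a) = [].
Proof. unfold wordA. destruct (excluded_middle_informative _); reflexivity. Qed.
Lemma projw_map {A : Group} {I : Type} (u : list (letter I)) : projw (map (@inr {a : A | a <> gone} _) u) = u.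
Proof. induction u; simpl; congruence. Qed.

Lemma proj_cong (A : Group) I lt fs psi (u v : list (genS A I)) :
  cong _ (relS A I lt fs psi) u v -> cong _ (relB I lt) (projw u) (projw v).
Proof.
  induction 1.
  - rewrite !projw_app. apply cong_app.
    destruct H as [H|[H|[H|H]]].
    + destruct H as [a [a' [-> ->]]]. rewrite projw_wordA. apply cong_refl.
    + destruct H as [a [i [e [-> ->]]]]. simpl. rewrite projw_wordA. apply cong_refl.
    + destruct H as [p [q [e [d [hqp [-> ->]]]]]]. simpl. rewrite projw_wordA.
      apply cong_rel. left. exists p, q, e, d. auto.
    + destruct H as [q [e [-> ->]]]. simpl. apply cong_rel. right. exists q, e. auto.
  - apply cong_refl.
  - apply cong_sym; assumption.
  - eapply cong_trans; eassumption.
Qed.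

Lemma relB_inv I lt (g : letter I) : cong _ (relB I lt) [g; linv I g] [].
Proof. apply cong_rel. right. exists (fst g), (snd g). destruct g; split; reflexivity. Qed.

Lemma is_hom_one (A B : Group) (f : A -> B) : is_hom A B f -> f gone = gone.
Proof. intro h. apply idem_one. rewrite <- h. now rewrite gmul1l. Qed.
Lemma is_hom_inv (A B : Group) (f : A -> B) : is_hom A B f -> forall x, f (ginv x) = ginv (f x).
Proof. intros h x. apply ginv_unique. rewrite <- h, gmulVr. now apply is_hom_one. Qed.

Lemma backward (A G : Group) (I : Type) (lt : I -> I -> Prop)
  (lt_irrefl : forall i, ~ lt i i)
  (lt_trans : forall i j k, lt i j -> lt j k -> lt i k)
  (lt_total : forall i j, lt i j \/ i = j \/ lt j i)
  (fs : I -> bool -> I -> bool -> A) (psi : I -> bool -> A -> A)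
  (aut : forall i e, is_aut A (psi i e))
  (cond1 : forall p q r e d g, lt q p -> lt r q ->
       gmul (gmul (fs p e q d) (psi q d (fs p e r g))) (fs q d r g) =
       gmul (gmul (psi p e (fs q d r g)) (fs p e r g)) (psi r g (fs p e q d)))
  (cond2 : forall p q e d, lt q p ->
       gmul (fs p e q (negb d)) (psi q (negb d) (fs p e q d)) = gone)
  (cond3 : forall p q e d, lt q p ->
       gmul (psi p (negb e) (fs p e q d)) (fs p (negb e) q d) = gone)
  (cond4 : forall p q e d (a : A), lt q p ->
       gmul (psi p e (psi q d a)) (fs p e q d) =
       gmul (fs p e q d) (psi q d (psi p e a)))
  (cond5 : forall r e (a : A), psi r (negb e) (psi r e a) = a)
  (pres : presents G (genS A I) (relS A I lt fs psi)) :
  schreier_ext A G I lt.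
Proof.
  assert (psi_hom : forall i e a b, psi i e (gmul a b) = gmul (psi i e a) (psi i e b)).
  { intros i e a b. apply (proj1 (aut i e)). }
  destruct pres as [phi [phi0 [phiapp [phisurj phiiff]]]].
  set (H := QG (letter I) (relB I lt) (linv I) (relB_inv I lt) (linv_linv I)).
  set (iota := fun a : A => phi (wordA A I a)).
  set (repG := fun g : G => proj1_sig (constructive_indefinite_description _ (phisurj g))).
  assert (repG_spec : forall g, phi (repG g) = g).
  { intro g. unfold repG. destruct (constructive_indefinite_description _ _). exact e. }
  set (pi := fun g : G => (mk (letter I) (relB I lt) (projw (repG g)) : H)).
  assert (pi_phi : forall w, pi (phi w) = mk _ _ (projw w)).
  { intro w. unfold pi. apply mk_eq. apply (proj_cong A I lt fs psi). apply phiiff. apply repG_spec. }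
  assert (iota_hom : is_hom A G iota).
  { intros a b. unfold iota. rewrite <- phiapp. apply phiiff. apply cong_sym. apply L5. }
  exists H, iota, pi.
  split; [exact iota_hom|]. split; [|split; [|split; [|split]]].
  - intros a b E. unfold iota in E. apply phiiff in E.
    pose proof (act_cong A I lt lt_irrefl lt_trans lt_total fs psi psi_hom cond1 cond2 cond3 cond4 cond5
                  _ _ E ([], gone) Logic.I) as E'.
    rewrite !act_wordA in E'. simpl in E'. rewrite !gmul1l in E'. congruence.
  - intros g h. rewrite <- (repG_spec g), <- (repG_spec h), <- phiapp, !pi_phi.
    simpl. unfold qmul. rewrite mk_repl, mk_repr, projw_app. reflexivity.
  - intro q. exists (phi (map inr (rep _ _ q))). rewrite pi_phi, projw_map. apply mk_rep.
  - intro g. split.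
    + intro E. rewrite <- (repG_spec g) in E |- *. rewrite pi_phi in E. simpl in E. unfold qone in E.
      apply mk_eq in E.
      assert (L1 : forall w : list (genS A I), exists a, cong _ (relS A I lt fs psi) w (map inr (projw w) ++ wordA A I a)).
      { induction w as [|[b|x] w IH].
        - exists gone. rewrite wordA_one. apply cong_refl.
        - destruct IH as [a Ha]. destruct (L3 A I lt fs psi psi_hom (projw w) (proj1_sig b)) as [a' Ha'].
          exists (gmul a' a). simpl.
          change (inl b :: w) with ([inl b] ++ w). rewrite <- wordA_sig.
          eapply cong_trans. apply cong_appr. exact Ha. rewrite app_assoc.
          eapply cong_trans. apply cong_appl. exact Ha'. rewrite <- app_assoc. apply cong_appr. apply L5.
        - destruct IH as [a Ha]. exists a. simpl. change (inr x :: w) with ([inr x] ++ w).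
          change (inr x :: map inr (projw w) ++ wordA A I a) with ([inr x] ++ (map inr (projw w) ++ wordA A I a)).
          apply cong_appr. exact Ha. }
      assert (L2 : forall u v, cong _ (relB I lt) u v -> exists a,
                cong _ (relS A I lt fs psi) (map inr u) (map inr v ++ wordA A I a)).
      { induction 1.
        - destruct H0 as [H0|H0].
          + destruct H0 as [p [q [e [d [hqp [-> ->]]]]]].
            destruct (L3 A I lt fs psi psi_hom v (fs p e q d)) as [a' Ha'].
            exists a'. rewrite !map_app, <- app_assoc. apply cong_appr. simpl.
            change ((inr (p,e) : genS A I) :: (inr (q,d) : genS A I) :: map inr v) with ([(inr (p,e) : genS A I); (inr (q,d) : genS A I)] ++ map inr v).
            eapply cong_trans. apply cong_appl. apply cong_rel. right; right; left.
            exists p, q, e, d. split. exact hqp. split; reflexivity.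
            rewrite <- app_assoc. simpl. 
            change ((inr (q,d) : genS A I) :: (inr (p,e) : genS A I) :: wordA A I (fs p e q d) ++ map inr v) with
              ([(inr (q,d) : genS A I); (inr (p,e) : genS A I)] ++ (wordA A I (fs p e q d) ++ map inr v)).
            change ((inr (q,d) : genS A I) :: (inr (p,e) : genS A I) :: map inr v ++ wordA A I a') with
              ([(inr (q,d) : genS A I); (inr (p,e) : genS A I)] ++ (map inr v ++ wordA A I a')).
            apply cong_appr. exact Ha'.
          + destruct H0 as [q [e [-> ->]]]. exists gone. rewrite wordA_one, app_nil_r, !map_app.
            apply cong_app. apply (cS_x A I lt fs psi (q,e)).
        - exists gone. rewrite wordA_one, app_nil_r. apply cong_refl.
        - destruct IHcong as [a Ha]. exists (ginv a).
          eapply cong_trans. 2:{ apply cong_appl. apply cong_sym. exact Ha. }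
          rewrite <- app_assoc. rewrite <- (app_nil_r (map inr w2)) at 1. apply cong_appr.
          eapply cong_trans. 2:{ apply cong_sym. apply L5. } rewrite gmulVr, wordA_one. apply cong_refl.
        - destruct IHcong1 as [a Ha], IHcong2 as [b Hb]. exists (gmul b a).
          eapply cong_trans. exact Ha. eapply cong_trans. apply cong_appl. exact Hb.
          rewrite <- app_assoc. apply cong_appr. apply L5. }
      destruct (L1 (repG g)) as [a Ha]. destruct (L2 _ _ E) as [a' Ha'].
      exists (gmul a' a). rewrite iota_hom. unfold iota. rewrite <- phiapp. apply phiiff.
      eapply cong_trans. exact Ha. apply cong_appl. exact Ha'.
    + intros [a ->]. unfold iota. rewrite pi_phi, projw_wordA. reflexivity.
  - apply QG_presents.
Qed.


Lemma forward (A G : Group) (I : Type) (lt : I -> I -> Prop)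
  (lt_irrefl : forall i, ~ lt i i)
  (lt_trans : forall i j k, lt i j -> lt j k -> lt i k)
  (lt_total : forall i j, lt i j \/ i = j \/ lt j i) :
  schreier_ext A G I lt ->
  exists (fs : I -> bool -> I -> bool -> A) (psi : I -> bool -> A -> A),
    (forall i e, is_aut A (psi i e)) /\
    (forall p q r e d g, lt q p -> lt r q ->
       gmul (gmul (fs p e q d) (psi q d (fs p e r g))) (fs q d r g) =
       gmul (gmul (psi p e (fs q d r g)) (fs p e r g)) (psi r g (fs p e q d))) /\
    (forall p q e d, lt q p ->
       gmul (fs p e q (negb d)) (psi q (negb d) (fs p e q d)) = gone) /\
    (forall p q e d, lt q p ->
       gmul (psi p (negb e) (fs p e q d)) (fs p (negb e) q d) = gone) /\
    (forall p q e d (a : A), lt q p ->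
       gmul (psi p e (psi q d a)) (fs p e q d) =
       gmul (fs p e q d) (psi q d (psi p e a))) /\
    (forall r e (a : A), psi r (negb e) (psi r e a) = a) /\
    presents G (genS A I) (relS A I lt fs psi).
Proof.
  intros [H [iota [pi [ihom [iinj [phom [psurj [ker pres]]]]]]]].
  destruct pres as [phiH [ph0 [phapp [phsurj phiff]]]].
  assert (iota1 : iota gone = gone) by (apply is_hom_one; exact ihom).
  assert (pi1 : pi gone = gone) by (apply is_hom_one; exact phom).
  assert (piV : forall g, pi (ginv g) = ginv (pi g)) by (apply is_hom_inv; exact phom).
  assert (pi_iota : forall a, pi (iota a) = gone) by (intro a; apply ker; eauto).
  pose (t := fun i => proj1_sig (constructive_indefinite_description _ (psurj (phiH [(i,true)])))).
  assert (t_spec : forall i, pi (t i) = phiH [(i,true)]).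
  { intro i. unfold t. destruct (constructive_indefinite_description _ _). exact e. }
  clearbody t.
  pose (T := fun x : letter I => if snd x then t (fst x) else ginv (t (fst x))).
  assert (T_neg : forall i e, T (i, negb e) = ginv (T (i, e))).
  { intros i e. destruct e; unfold T; simpl. reflexivity. now rewrite ginv_inv. }
  assert (pi_T : forall x, pi (T x) = phiH [x]).
  { intros [i e]. destruct e; unfold T; simpl. apply t_spec. rewrite piV, t_spec.
    symmetry. apply ginv_unique. rewrite <- phapp. rewrite <- ph0. apply phiff. apply cong_rel.
    right. exists i, true. split; reflexivity. }
  clearbody T.
  pose (pre := fun g : G => match excluded_middle_informative (exists a, g = iota a) with
                 | left h => proj1_sig (constructive_indefinite_description _ h) | right _ => gone end).
  assert (pre_spec : forall g, pi g = gone -> iota (pre g) = g).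
  { intros g hg. apply ker in hg. unfold pre. destruct (excluded_middle_informative _) as [h|h]; [|contradiction].
    destruct (constructive_indefinite_description _ _). simpl. auto. }
  clearbody pre.
  pose (psi := fun i e a => pre (gmul (ginv (T (i,e))) (gmul (iota a) (T (i,e))))).
  pose (fs := fun p e q d => pre (gmul (ginv (T (p,e))) (gmul (ginv (T (q,d))) (gmul (T (p,e)) (T (q,d)))))).
  assert (iota_psi : forall i e a, iota (psi i e a) = gmul (ginv (T (i,e))) (gmul (iota a) (T (i,e)))).
  { intros. apply pre_spec. rewrite !phom, piV, pi_iota. autorewrite with grp. reflexivity. }
  assert (iota_fs : forall p e q d, lt q p ->
     iota (fs p e q d) = gmul (ginv (T (p,e))) (gmul (ginv (T (q,d))) (gmul (T (p,e)) (T (q,d))))).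
  { intros p e q d hqp. apply pre_spec. rewrite !phom, !piV, !pi_T.
    assert (C : forall x y : letter I, lt (fst y) (fst x) -> gmul (phiH [x]) (phiH [y]) = gmul (phiH [y]) (phiH [x])).
    { intros [p' e'] [q' d'] h. rewrite <- !phapp. simpl. apply phiff. apply cong_rel. left. exists p', q', e', d'. auto. }
    rewrite (C (p,e) (q,d) hqp). autorewrite with grp. reflexivity. }
  clearbody psi fs.
  assert (aut : forall i e, is_aut A (psi i e)).
  { intros i e. split; [|split].
    - intros a b. apply iinj. rewrite ihom, !iota_psi, ihom. autorewrite with grp. reflexivity.
    - intros a b E. apply (f_equal iota) in E. rewrite !iota_psi in E. apply iinj.
      apply (f_equal (fun z => gmul (T (i,e)) (gmul z (ginv (T (i,e)))))) in E.
      autorewrite with grp in E. exact E.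
    - intro y. exists (pre (gmul (T (i,e)) (gmul (iota y) (ginv (T (i,e)))))). apply iinj.
      rewrite iota_psi, pre_spec. autorewrite with grp. reflexivity.
      rewrite !phom, piV, pi_iota. autorewrite with grp. reflexivity. }
  assert (psi_hom : forall i e a b, psi i e (gmul a b) = gmul (psi i e a) (psi i e b)).
  { intros. apply (proj1 (aut i e)). }
  assert (c1 : forall p q r e d g, lt q p -> lt r q ->
       gmul (gmul (fs p e q d) (psi q d (fs p e r g))) (fs q d r g) =
       gmul (gmul (psi p e (fs q d r g)) (fs p e r g)) (psi r g (fs p e q d))).
  { intros p q r e d g hqp hrq. assert (hrp : lt r p) by eauto. apply iinj.
    rewrite !ihom, !iota_psi, (iota_fs p e q d hqp), (iota_fs p e r g hrp), (iota_fs q d r g hrq).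
    autorewrite with grp. reflexivity. }
  assert (c2 : forall p q e d, lt q p ->
       gmul (fs p e q (negb d)) (psi q (negb d) (fs p e q d)) = gone).
  { intros p q e d hqp. apply iinj. rewrite ihom, iota_psi, !iota_fs, iota1, !T_neg by exact hqp.
    autorewrite with grp. reflexivity. }
  assert (c3 : forall p q e d, lt q p ->
       gmul (psi p (negb e) (fs p e q d)) (fs p (negb e) q d) = gone).
  { intros p q e d hqp. apply iinj. rewrite ihom, iota_psi, !iota_fs, iota1, !T_neg by exact hqp.
    autorewrite with grp. reflexivity. }
  assert (c4 : forall p q e d (a : A), lt q p ->
       gmul (psi p e (psi q d a)) (fs p e q d) =
       gmul (fs p e q d) (psi q d (psi p e a))).
  { intros p q e d a hqp. apply iinj. rewrite !ihom, !iota_psi, !iota_fs by exact hqp.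
    autorewrite with grp. reflexivity. }
  assert (c5 : forall r e (a : A), psi r (negb e) (psi r e a) = a).
  { intros r e a. apply iinj. rewrite !iota_psi, T_neg. autorewrite with grp. reflexivity. }
  exists fs, psi. split; [exact aut|]. do 5 (split; [assumption|]).
  pose (ev := fun g : genS A I => match g with inl a => iota (proj1_sig a) | inr x => T x end).
  pose (phiG := fun w : list (genS A I) => fold_right (fun g r => gmul (ev g) r) gone w).
  assert (phiG_app : forall u v, phiG (u ++ v) = gmul (phiG u) (phiG v)).
  { intros u v. induction u as [|g u IH]; simpl. now rewrite gmul1l. rewrite IH. apply gmulA. }
  assert (phiG_wordA : forall a, phiG (wordA A I a) = iota a).
  { intro a. unfold wordA. destruct (excluded_middle_informative _) as [h|h]; simpl.
    subst. now rewrite iota1. apply gmul1r. }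
  assert (pi_map : forall w, pi (phiG (map inr w)) = phiH w).
  { induction w as [|x w IH]; simpl. rewrite pi1. symmetry. exact ph0.
    rewrite phom. simpl in IH. rewrite IH, pi_T, <- phapp. reflexivity. }
  assert (sound : forall u v, cong _ (relS A I lt fs psi) u v -> phiG u = phiG v).
  { induction 1.
    - rewrite !phiG_app. f_equal. f_equal.
      destruct H0 as [H0|[H0|[H0|H0]]].
      + destruct H0 as [a [a' [-> ->]]]. rewrite phiG_wordA, ihom. simpl. now rewrite gmul1r.
      + destruct H0 as [a [i [e [-> ->]]]]. change (inr (i,e) :: wordA A I (psi i e (proj1_sig a)))
          with ([inr (i,e)] ++ wordA A I (psi i e (proj1_sig a))).
        rewrite phiG_app, phiG_wordA, iota_psi. simpl. autorewrite with grp. reflexivity.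
      + destruct H0 as [p [q [e [d [hqp [-> ->]]]]]]. rewrite phiG_app, phiG_wordA, (iota_fs p e q d hqp).
        simpl. autorewrite with grp. reflexivity.
      + destruct H0 as [q [e [-> ->]]]. simpl. rewrite T_neg. autorewrite with grp. reflexivity.
    - reflexivity.
    - symmetry; assumption.
    - congruence. }
  exists phiG. split; [reflexivity|]. split; [exact phiG_app|]. split.
  - intro g. destruct (phsurj (pi g)) as [w hw].
    set (g0 := phiG (map inr w)).
    assert (hk : pi (gmul (ginv g0) g) = gone).
    { rewrite phom, piV. unfold g0. rewrite pi_map, hw. apply gmulVl. }
    apply ker in hk. destruct hk as [a ha]. exists (map inr w ++ wordA A I a).
    rewrite phiG_app, phiG_wordA, <- ha. fold g0. autorewrite with grp. reflexivity.
  - intros u v. split; [|apply sound]. intro E.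
    pose proof (NF_lemma A I lt lt_irrefl fs psi psi_hom u) as Nu.
    pose proof (NF_lemma A I lt lt_irrefl fs psi psi_hom v) as Nv.
    pose proof (act_srt A I lt lt_trans lt_total fs psi u ([], gone) Logic.I) as Su.
    pose proof (act_srt A I lt lt_trans lt_total fs psi v ([], gone) Logic.I) as Sv.
    destruct (act A I lt fs psi u ([], gone)) as [ru au].
    destruct (act A I lt fs psi v ([], gone)) as [rv av]. simpl in *.
    assert (E2 : phiG (map inr (rev ru) ++ wordA A I au) = phiG (map inr (rev rv) ++ wordA A I av)).
    { rewrite <- (sound _ _ Nu), <- (sound _ _ Nv). exact E. }
    rewrite !phiG_app, !phiG_wordA in E2.
    assert (E3 : phiH (rev ru) = phiH (rev rv)).
    { apply (f_equal pi) in E2. rewrite !phom, !pi_map, !pi_iota, !gmul1r in E2. exact E2. }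
    apply phiff in E3.
    pose proof (actL_cong A I lt lt_irrefl lt_trans lt_total fs psi psi_hom c1 c2 c3 c4 c5 _ _ E3 [] Logic.I) as E4.
    rewrite !(actL_rev A I lt lt_irrefl lt_trans fs psi) in E4 by assumption. subst rv.
    apply gmul_cancel_l in E2. apply iinj in E2. subst av.
    eapply cong_trans. exact Nu. apply cong_sym. exact Nv.
Qed.


Theorem theorem2p6 (A G : Group) (I : Type) (lt : I -> I -> Prop)
  (lt_irrefl : forall i, ~ lt i i)
  (lt_trans : forall i j k, lt i j -> lt j k -> lt i k)
  (lt_total : forall i j, lt i j \/ i = j \/ lt j i) :
  schreier_ext A G I lt <->
  exists (fs : I -> bool -> I -> bool -> A) (psi : I -> bool -> A -> A),
    (forall i e, is_aut A (psi i e)) /\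
    (* 1 *)
    (forall p q r e d g, lt q p -> lt r q ->
       gmul (gmul (fs p e q d) (psi q d (fs p e r g))) (fs q d r g) =
       gmul (gmul (psi p e (fs q d r g)) (fs p e r g)) (psi r g (fs p e q d))) /\
    (* 2 *)
    (forall p q e d, lt q p ->
       gmul (fs p e q (negb d)) (psi q (negb d) (fs p e q d)) = gone) /\
    (* 3 *)
    (forall p q e d, lt q p ->
       gmul (psi p (negb e) (fs p e q d)) (fs p (negb e) q d) = gone) /\
    (* 4 *)
    (forall p q e d (a : A), lt q p ->
       gmul (psi p e (psi q d a)) (fs p e q d) =
       gmul (fs p e q d) (psi q d (psi p e a))) /\
    (* 5 *)
    (forall r e (a : A), psi r (negb e) (psi r e a) = a) /\
    presents G (genS A I) (relS A I lt fs psi).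
Proof.
  split.
  - apply forward; assumption.
  - intros [fs [psi [aut [c1 [c2 [c3 [c4 [c5 pres]]]]]]]].
    eapply backward; eassumption.
Qed.
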